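(* Let $G=(V,E)$ be a finite graph with at least one vertex and $k>0$ an integer. Then $G$ has a bramble of order at least $k$ if and only if $G$ has an $\mathcal F_k$-tangle of $S_k$, where $\mathcal F_k$ is the set of all stars $\sigma=\{(A_i,B_i):i=0,\dots,n\}\subseteq\vec S_k$ with $\bigl|\bigcap_{i=0}^nB_i\bigr|<k$.
   Context: An oriented vertex separation of $G$ is an ordered pair $(A,B)$ with $A\cup B=V$ and no edge between $A\setminus B$ and $B\setminus A$; $(A,B)\le(C,D)$ iff $A\subseteq C$ and $B\supseteq D$; $(A,B)^*=(B,A)$. $\vec S_k$ is the set of those with $|A\cap B|<k$, and $S_k$ the set of pairs $\{(A,B),(B,A)\}$ with $(A,B)\in\vec S_k$. A star is a nonempty set $\sigma$ with $\vec r\le\vec s^{\,*}$ for all distinct $\vec r,\vec s\in\sigma$. An orientation of $S_k$ contains exactly one of $(A,B),(B,A)$ for each such pair; it is consistent if there are no distinct $r,s\in S_k$ with orientations $\vec r<\vec s$ such that $\vec r^{\,*},\vec s\in O$; an $\mathcal F_k$-tangle is a consistent orientation of $S_k$ no subset of which lies in $\mathcal F_k$. Two vertex sets touch if they share a vertex or $G$ has an edge between them. A bramble is a set of vertex sets each inducing a connected subgraph, any two of which touch; its order is the minimum size of a vertex set meeting every element of the bramble. *)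

(* Defs.v *)
From mathcomp Require Import all_boot.
Set Implicit Arguments. Unset Strict Implicit. Unset Printing Implicit Defensive.

Section Defs.
Variables (T : finType) (e : rel T).

Definition osep := ({set T} * {set T})%type.

Definition is_osep (s : osep) : Prop :=
  s.1 :|: s.2 = setT /\
  forall x y, x \in s.1 :\: s.2 -> y \in s.2 :\: s.1 -> ~~ e x y.

Definition sep_le (r s : osep) : Prop := r.1 \subset s.1 /\ s.2 \subset r.2.

Definition flip (s : osep) : osep := (s.2, s.1).

Definition in_vSk (k : nat) (s : osep) : Prop := is_osep s /\ #|s.1 :&: s.2| < k.

Definition is_star (sigma : {set osep}) : Prop :=
  sigma != set0 /\
  forall r s, r \in sigma -> s \in sigma -> r <> s -> sep_le r (flip s).

Definition in_Fk (k : nat) (sigma : {set osep}) : Prop :=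
  (forall s, s \in sigma -> in_vSk k s) /\ is_star sigma /\
  #|\bigcap_(s in sigma) s.2| < k.

Definition is_orientation (k : nat) (O : {set osep}) : Prop :=
  (forall s, s \in O -> in_vSk k s) /\
  (forall s, in_vSk k s -> #|O :&: [set s; flip s]| = 1).

Definition consistent (k : nat) (O : {set osep}) : Prop :=
  forall r s, in_vSk k r -> in_vSk k s -> r <> s -> r <> flip s ->
    sep_le r s -> ~ (flip r \in O /\ s \in O).

Definition Fk_tangle (k : nat) (O : {set osep}) : Prop :=
  is_orientation k O /\ consistent k O /\
  forall sigma : {set osep}, sigma \subset O -> ~ in_Fk k sigma.

Definition connected_set (X : {set T}) : Prop :=
  X != set0 /\
  forall x y, x \in X -> y \in X ->
    connect [rel u v | [&& e u v, u \in X & v \in X]] x y.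

Definition touch (X Y : {set T}) : Prop :=
  X :&: Y != set0 \/ exists x y, [/\ x \in X, y \in Y & e x y].

Definition is_bramble (B : {set {set T}}) : Prop :=
  (forall X, X \in B -> connected_set X) /\
  (forall X Y, X \in B -> Y \in B -> touch X Y).

Definition covers (B : {set {set T}}) (X : {set T}) : bool :=
  [forall Y in B, X :&: Y != set0].

(* order: minimum size of a set meeting every element of B
   (the default #|T| is never smaller than the true minimum, since setT
   meets every nonempty element) *)
Definition bramble_order (B : {set {set T}}) : nat :=
  \big[minn/#|T|]_(X : {set T} | covers B X) #|X|.

End Defs.

(* Main.v *)
Require Import Defs.
From mathcomp Require Import all_boot.
From Stdlib Require Classical_Prop.
Set Implicit Arguments. Unset Strict Implicit. Unset Printing Implicit Defensive.

Section Aux.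
Variables (T : finType) (e : rel T).
Hypothesis esymm : symmetric e.

Definition relX (X : {set T}) := [rel u v | [&& e u v, u \in X & v \in X]].

Lemma flipK (s : osep T) : flip (flip s) = s.
Proof. by case: s. Qed.

Lemma osep_flip s : is_osep e s -> is_osep e (flip s).
Proof.
case=> H1 H2; split; first by rewrite /flip /= setUC.
move=> x y Hx Hy; rewrite esymm; exact: H2.
Qed.

Lemma vSk_flip k s : in_vSk e k s -> in_vSk e k (flip s).
Proof. by case=> H1 H2; split; [apply: osep_flip | rewrite /flip /= setIC]. Qed.

Definition osepb (s : osep T) : bool :=
  (s.1 :|: s.2 == setT) &&
  [forall x, forall y, (x \in s.1 :\: s.2) ==> (y \in s.2 :\: s.1) ==> ~~ e x y].

Lemma osepP s : reflect (is_osep e s) (osepb s).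
Proof.
apply: (iffP andP) => [[/eqP H1 /forallP H2]|[H1 H2]]; split => //.
- move=> x y Hx Hy; move/forallP: (H2 x) => /(_ y).
  by rewrite Hx Hy.
- by apply/eqP.
- apply/forallP => x; apply/forallP => y; apply/implyP => Hx; apply/implyP => Hy.
  exact: H2.
Qed.

Lemma conn_stay (X P : {set T}) x y :
  (forall a b, a \in X -> b \in X -> e a b -> a \in P -> b \in P) ->
  x \in P -> connect (relX X) x y -> y \in P.
Proof.
move=> H xP /connectP [p Hp ->]; elim: p x xP Hp => //= z p IH x xP /andP [/and3P [exz xX zX] Hp].
apply: IH Hp; exact: H exz xP.
Qed.

Lemma conn_sub (X P : {set T}) :
  connected_set e X ->
  (forall a b, a \in X -> b \in X -> e a b -> a \in P -> b \in P) ->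
  forall x, x \in X -> x \in P -> X \subset P.
Proof.
case=> _ Hc H x xX xP; apply/subsetP => y yX; apply: conn_stay H xP _; exact: Hc.
Qed.

Lemma notouch (X Y : {set T}) (s : osep T) :
  is_osep e s -> X \subset s.1 :\: s.2 -> Y \subset s.2 :\: s.1 -> ~ touch e X Y.
Proof.
case=> _ Hs HX HY [/set0Pn [z]|[x [y [xX yY exy]]]].
- rewrite inE => /andP [/(subsetP HX) zX /(subsetP HY) zY].
  by move: zX zY; rewrite !inE => /andP [/negbTE -> _] /andP [].
- by move: (Hs x y (subsetP HX x xX) (subsetP HY y yY)); rewrite exy.
Qed.

Lemma bigmin_le (I : eqType) (r : seq I) (P : pred I) (F : I -> nat) d y :
  y \in r -> P y -> \big[minn/d]_(i <- r | P i) F i <= F y.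
Proof.
elim: r => // z r IH; rewrite inE big_cons => /orP [/eqP -> -> | yr Py].
- exact: geq_minl.
- case: ifP => _; last exact: IH.
  exact: leq_trans (geq_minr _ _) (IH yr Py).
Qed.


Lemma osep_notin2 s y : is_osep e s -> y \notin s.2 -> y \in s.1.
Proof.
case=> H _ ny; have: y \in s.1 :|: s.2 by rewrite H inE.
by rewrite inE (negbTE ny) orbF.
Qed.

Lemma osep_notin1 s y : is_osep e s -> y \notin s.1 -> y \in s.2.
Proof.
case=> H _ ny; have: y \in s.1 :|: s.2 by rewrite H inE.
by rewrite inE (negbTE ny).
Qed.

Lemma card_pair1 (O : {set osep T}) a b :
  (a \in O) -> (b \notin O) -> #|O :&: [set a; b]| = 1.
Proof.
move=> Ha Hb; suff -> : O :&: [set a; b] = [set a] by rewrite cards1.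
apply/setP => u; rewrite !inE; case: (eqVneq u a) => [->|_]; first by rewrite Ha.
by case: eqP => [->|]; rewrite ?(negbTE Hb) ?andbF.
Qed.

Lemma card_pair2 (O : {set osep T}) a b :
  (a \notin O) -> (b \in O) -> #|O :&: [set a; b]| = 1.
Proof. by move=> Ha Hb; rewrite setUC card_pair1. Qed.

Lemma forward k (B : {set {set T}}) :
  is_bramble e B -> k <= bramble_order B -> exists O, Fk_tangle e k O.
Proof.
move=> [Bc Bt] Hk.
have avoid : forall Y : {set T}, #|Y| < k -> exists2 X, X \in B & Y :&: X == set0.
  move=> Y HY; case/boolP: (covers B Y) => Hc.
  - have : bramble_order B <= #|Y|.
      by apply: bigmin_le => //; rewrite mem_index_enum.
    by move=> H; move: (leq_trans Hk H); rewrite leqNgt HY.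
  - move: Hc; rewrite /covers negb_forall => /existsP [X].
    by rewrite negb_imply => /andP [XB /negPn H]; exists X.
have side : forall (s : osep T) x, is_osep e s -> x \notin s.1 :&: s.2 ->
    (x \in s.1 :\: s.2) || (x \in s.2 :\: s.1).
  move=> s x [H _]; have: x \in s.1 :|: s.2 by rewrite H inE.
  by rewrite !inE; case: (x \in s.1); case: (x \in s.2).
have split2 : forall s, in_vSk e k s -> exists2 X, X \in B &
    (X \subset s.1 :\: s.2 \/ X \subset s.2 :\: s.1).
  move=> s [Hs Hk2]; have [X XB HX] := avoid _ Hk2; exists X => //.
  have Xc := Bc X XB; have [/set0Pn [x0 x0X] _] := Xc.
  have av : forall y, y \in X -> y \notin s.1 :&: s.2.
    move=> y yX; apply/negP => ys; move/eqP/setP: HX => /(_ y).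
    by rewrite !inE yX; move: ys; rewrite inE => ->.
  case/orP: (side _ _ Hs (av _ x0X)) => Hx0; [left|right];
    apply: (conn_sub Xc _ x0X Hx0) => a b aX bX eab aP;
    case/orP: (side _ _ Hs (av _ bX)) => // bP; exfalso; case: Hs => _ Hs.
  - by move: (Hs a b aP bP); rewrite eab.
  - by move: (Hs b a bP aP); rewrite esymm eab.
pose O := [set s | [&& osepb s, #|s.1 :&: s.2| < k &
                     [exists X in B, X \subset s.2 :\: s.1]]].
have inO : forall s, s \in O <-> in_vSk e k s /\ exists2 X, X \in B & X \subset s.2 :\: s.1.
  move=> s; rewrite inE; split.
  - case/and3P => /osepP H1 H2 /existsP [X /andP [XB HX]]; split => //; by exists X.
  - case=> [[H1 H2] [X XB HX]]; apply/and3P; split; first exact/osepP; first exact: H2.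
    by apply/existsP; exists X; rewrite XB.
have excl : forall s, ~ (s \in O /\ flip s \in O).
  move=> s [/inO [[Hs _] [Y YB HY]] /inO [_ [Z ZB HZ]]].
  exact: (notouch Hs HZ HY (Bt _ _ ZB YB)).
exists O; split; [split|split].
- by move=> s /inO [].
- move=> s Hs; have [X XB [HX|HX]] := split2 _ Hs.
  + have fO : flip s \in O by apply/inO; split; [exact: vSk_flip | by exists X].
    apply: card_pair2 => //; apply/negP => sO; exact: (excl s).
  + have sO : s \in O by apply/inO; split => //; exists X.
    apply: card_pair1 => //; apply/negP => fO; exact: (excl s).
- move=> r s _ _ _ _ [H1 H2] [/inO [_ [X XB HX]] /inO [[Hs _] [Y YB HY]]].
  apply: (notouch Hs _ HY (Bt _ _ XB YB)).
  apply: (subset_trans HX); apply: subset_trans (setSD _ H1) (setDS _ H2).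
- move=> sigma sO [Hall [[Hne Hst] Hcap]].
  have [X XB HX] := avoid _ Hcap.
  have Xc := Bc X XB; have [/set0Pn [x0 x0X] _] := Xc.
  have pick : forall y, y \in X -> exists2 s, s \in sigma & y \notin s.2.
    move=> y yX; case/boolP: [exists s in sigma, y \notin s.2] =>
      [/existsP [s /andP [sS ys]] | /existsPn H]; first by exists s.
    exfalso; move/eqP/setP: HX => /(_ y); rewrite inE [y \in set0]inE yX andbT => /negP; apply.
    by apply/bigcapP => s sS; move: (H s); rewrite sS /= negbK.
  have [s sS x0s] := pick _ x0X.
  have [Hs _] := Hall s sS.
  have HXs : X \subset s.1 :\: s.2.
    apply: (conn_sub Xc _ x0X); last by rewrite inE x0s (osep_notin2 Hs).
    move=> a b aX bX eab aP; have [s' s'S bs'] := pick _ bX.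
    have [Hs' _] := Hall s' s'S.
    have bs'1 := osep_notin2 Hs' bs'.
    case: (eqVneq s s') => [Es|ne]; first by subst s'; rewrite inE bs' bs'1.
    have [L1 L2] := Hst s s' sS s'S (elimN eqP ne).
    have b2 : b \in s.2 := subsetP L2 _ bs'1.
    have nb1 : b \notin s.1 by apply/negP => /(subsetP L1); rewrite (negbTE bs').
    case: Hs => _ Hs; move: (Hs a b aP); rewrite inE b2 nb1 => /(_ isT).
    by rewrite eab.
  have /inO [[Hs2 _] [Y YB HY]] : s \in O := subsetP sO s sS.
  exact: (notouch Hs2 HXs HY (Bt _ _ XB YB)).
Qed.

Definition nb (X : {set T}) := [set u | (u \notin X) && [exists w in X, e u w]].
Definition sepX (X : {set T}) : osep T := (~: X, X :|: nb X).

Lemma sepX_osep (X : {set T}) : is_osep e (sepX X).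
Proof.
split.
- apply/setP => u; rewrite !inE; by case: (u \in X).
- move=> x y; rewrite /sepX /= !inE => /andP [H1 H2] /andP [H3 H4].
  apply/negP => exy; move: H1; rewrite negb_or => /andP [_]; rewrite H2 /=.
  by case/negP; apply/existsP; exists y; rewrite exy andbT; move: H3; rewrite negbK.
Qed.

Lemma sepX_inter (X : {set T}) : (sepX X).1 :&: (sepX X).2 = nb X.
Proof.
apply/setP => u; rewrite /sepX /= !inE.
by case: (u \in X) => //=; rewrite andbF.
Qed.

Lemma sepX_le (X Y : {set T}) :
  (forall u, u \in X -> u \notin Y) -> (forall u, u \in nb X -> u \notin Y) ->
  (forall u, u \in nb Y -> u \notin X) -> sep_le (flip (sepX X)) (sepX Y).
Proof.
move=> H1 H2 H3; split; apply/subsetP => u; rewrite /sepX /= in_setU in_setC.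
- by case/orP => [/H1|/H2].
- case/orP => [uY|/H3 //]; apply/negP => uX; by move: (H1 u uX); rewrite uY.
Qed.

Lemma or_one k (O : {set osep T}) s : is_orientation e k O -> in_vSk e k s -> s \in O \/ flip s \in O.
Proof.
case=> _ H Hs; move: (H s Hs) => Hc.
have : 0 < #|O :&: [set s; flip s]| by rewrite Hc.
by rewrite card_gt0 => /set0Pn [u]; rewrite !inE => /andP [uO /orP [/eqP E|/eqP E]];
  [left|right]; rewrite -E.
Qed.

Lemma or_both k (O : {set osep T}) s : is_orientation e k O -> in_vSk e k s -> s \in O -> flip s \in O ->
  s = flip s.
Proof.
case=> _ H Hs sO fO; move: (H s Hs); case: (eqVneq s (flip s)) => // ne.
have -> : O :&: [set s; flip s] = [set s; flip s].
  by apply/setP => u; rewrite !inE; apply/andb_idl => /orP [/eqP->|/eqP->].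
by rewrite cards2 ne.
Qed.

Lemma sepX_vSk k (X : {set T}) : #|nb X| < k -> in_vSk e k (sepX X).
Proof. by move=> H; split; [exact: sepX_osep | rewrite sepX_inter]. Qed.

Lemma tangle_touch k (O : {set osep T}) (X Y : {set T}) : Fk_tangle e k O ->
  X != set0 -> sepX X \in O -> sepX Y \in O -> touch e X Y.
Proof.
move=> [Hor [Hcons _]] Xne XO YO.
case: (Classical_Prop.classic (touch e X Y)) => // nt; exfalso.
have [x xX] := set0Pn _ Xne.
have D1 : forall u, u \in X -> u \notin Y.
  move=> u uX; apply/negP => uY; apply: nt; left; apply/set0Pn; exists u; by rewrite inE uX.
have D2 : forall u, u \in nb X -> u \notin Y.
  move=> u; rewrite inE => /andP [_ /existsP [w /andP [wX euw]]]; apply/negP => uY.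
  apply: nt; right; exists w, u; split => //; by rewrite esymm.
have D3 : forall u, u \in nb Y -> u \notin X.
  move=> u; rewrite inE => /andP [_ /existsP [w /andP [wY euw]]]; apply/negP => uX.
  apply: nt; right; exists u, w; by split.
have [vX _] := (proj1 Hor) _ XO.
have vX' : in_vSk e k (sepX X) := conj vX (proj2 ((proj1 Hor) _ XO)).
have vY := (proj1 Hor) _ YO.
apply: (Hcons (flip (sepX X)) (sepX Y)).
- exact: vSk_flip.
- exact: vY.
- move=> E; have fO : flip (sepX X) \in O by rewrite E.
  move: (or_both Hor vX' XO fO) => /(congr1 fst) /setP /(_ x).
  by rewrite /sepX /= !inE xX.
- move=> E; move: (congr1 (@flip T) E); rewrite !flipK => /(congr1 fst) /setP /(_ x).
  by rewrite /sepX /= !inE xX => /esym /negbFE xY; move: (D1 x xX); rewrite xY.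
- exact: sepX_le.
- by rewrite flipK.
Qed.


Lemma comp_lemma k (O : {set osep T}) (Y : {set T}) : Fk_tangle e k O -> #|Y| < k ->
  exists C : {set T}, [/\ C != set0,
    (forall x y, x \in C -> y \in C -> connect (relX C) x y),
    sepX C \in O & forall u, u \in C -> u \notin Y].
Proof.
move=> [Hor [Hcons Hst]] HY.
case: (eqVneq Y setT) => [EY|NY].
  exfalso; pose s0 : osep T := (setT, setT).
  have v0 : in_vSk e k s0.
    split; [split; first by rewrite setUid | ].
    - by move=> x y; rewrite /s0 /= setDv inE.
    - by rewrite /s0 /= setIid -EY.
  have s0O : s0 \in O.
    by case: (or_one Hor v0).
  apply: (Hst [set s0]); first by rewrite sub1set.
  split; first by move=> s; rewrite inE => /eqP ->.
  split; first split.
  - by apply/set0Pn; exists s0; rewrite inE.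
  - by move=> r s; rewrite !inE => /eqP -> /eqP ->.
  - apply: leq_ltn_trans (subset_leq_card (subsetT _)) _; by rewrite cardsT -cardsT -EY.
pose relY := [rel a b | [&& e a b, a \notin Y & b \notin Y]].
have symY : connect_sym relY.
  apply: sym_connect_sym => a b /=; rewrite esymm; by case: (e b a); case: (a \in Y); case: (b \in Y).
pose comp v := [set u | connect relY v u].
have c1 : forall v u, v \notin Y -> u \in comp v -> u \notin Y.
  move=> v u vY; rewrite inE => /connectP [p Hp ->]; elim: p v vY Hp => //= z p IH v vY.
  by case/andP => /and3P [_ _ zY] Hp; exact: IH Hp.
have c2 : forall v u w, u \in comp v -> w \in comp v -> connect relY u w.
  move=> v u w; rewrite !inE => Hu Hw; apply: connect_trans Hw; by rewrite symY.
have c3 : forall v w u, u \in comp v -> u \in comp w -> comp v = comp w.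
  move=> v w u; rewrite !inE => Hv Hw; apply/setP => z; rewrite !inE.
  have Hvw : connect relY v w by apply: connect_trans Hv _; rewrite symY.
  apply/idP/idP => Hz; first by apply: connect_trans Hz; rewrite symY.
  exact: connect_trans Hvw Hz.
have c4 : forall v u, v \notin Y -> u \in nb (comp v) -> u \in Y.
  move=> v u vY; rewrite inE => /andP [uC /existsP [w /andP [wC euw]]].
  apply/negPn/negP => uY; move/negP: uC; apply; rewrite inE.
  apply: connect_trans (_ : connect relY v w) _; first by rewrite inE in wC.
  by apply: connect1; rewrite /= esymm euw uY (c1 _ _ vY wC).
have c5 : forall v x y, v \notin Y -> x \in comp v -> y \in comp v ->
    connect (relX (comp v)) x y.
  move=> v x y vY xC yC; have /connectP [p Hp ->] := c2 _ _ _ xC yC.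
  apply/connectP; exists p => //; elim: p x xC Hp => //= z p IH x xC.
  case/andP => /and3P [exz xY zY] Hp.
  have zC : z \in comp v by rewrite inE; apply: connect_trans (connect1 _); [rewrite inE in xC; exact: xC | rewrite /= exz xY zY].
  by rewrite exz xC zC /=; exact: IH.
have cv : forall v, v \notin Y -> in_vSk e k (sepX (comp v)).
  move=> v vY; apply: sepX_vSk; apply: leq_ltn_trans HY.
  by apply: subset_leq_card; apply/subsetP => u /(c4 _ _ vY).
have vin : forall v, v \in comp v by move=> v; rewrite inE connect0.
case/boolP: [exists v, (v \notin Y) && (sepX (comp v) \in O)] =>
  [/existsP [v /andP [vY vO]] | /existsPn H].
  exists (comp v); split => //.
  - by apply/set0Pn; exists v.
  - by move=> x y; apply: c5.
  - by move=> u; apply: c1.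
exfalso.
pose sigma := [set flip (sepX (comp v)) | v in ~: Y].
have fO : forall v, v \notin Y -> flip (sepX (comp v)) \in O.
  move=> v vY; case: (or_one Hor (cv v vY)) => // sO.
  by move: (H v); rewrite vY sO.
apply: (Hst sigma).
  by apply/subsetP => s /imsetP [v]; rewrite inE => vY ->; exact: fO.
split; first by move=> s /imsetP [v]; rewrite inE => vY ->; apply: vSk_flip; exact: cv.
split; first split.
- have [v vY] : exists v, v \notin Y.
    case: (boolP [exists v, v \notin Y]) => [/existsP //|/existsPn Hn].
    by move/eqP: NY; case; apply/setP => u; rewrite inE; move: (Hn u); rewrite negbK.
  by apply/set0Pn; exists (flip (sepX (comp v))); apply: imset_f; rewrite inE.
- move=> r s /imsetP [v]; rewrite inE => vY -> /imsetP [w]; rewrite inE => wY -> ne.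
  rewrite flipK; apply: sepX_le.
  + move=> u uv; apply/negP => uw; apply: ne; by rewrite (c3 _ _ _ uv uw).
  + by move=> u /(c4 _ _ vY) uY; apply/negP => /(c1 _ _ wY); rewrite uY.
  + by move=> u /(c4 _ _ wY) uY; apply/negP => /(c1 _ _ vY); rewrite uY.
- apply: leq_ltn_trans HY; apply: subset_leq_card; apply/subsetP => u /bigcapP Hu.
  apply/negPn/negP => uY.
  have := Hu (flip (sepX (comp u))); rewrite /= inE (vin u) => /(_ (imset_f _ _)).
  by rewrite inE => /(_ uY).
Qed.


Lemma backward k (O : {set osep T}) : Fk_tangle e k O ->
  exists B : {set {set T}}, is_bramble e B /\ k <= bramble_order B.
Proof.
move=> Ht.
pose B := [set X : {set T} | [&& X != set0,
   [forall x in X, forall y in X, connect (relX X) x y] & sepX X \in O]].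
have inB : forall X, X \in B -> [/\ X != set0,
    (forall x y, x \in X -> y \in X -> connect (relX X) x y) & sepX X \in O].
  move=> X; rewrite inE => /and3P [H1 /forall_inP H2 H3]; split => // x y xX yX.
  by move/forall_inP: (H2 x xX) => /(_ y yX).
have toB : forall X, X != set0 -> (forall x y, x \in X -> y \in X -> connect (relX X) x y) ->
    sepX X \in O -> X \in B.
  move=> X H1 H2 H3; rewrite inE H1 H3 andbT /=.
  by apply/forall_inP => x xX; apply/forall_inP => y yX; apply: H2.
exists B; split; first split.
- by move=> X /inB [H1 H2 _]; split.
- by move=> X Y /inB [Xne _ XO] /inB [_ _ YO]; exact: (tangle_touch Ht Xne XO YO).
rewrite /bramble_order; apply: (big_ind (fun n => k <= n)).
- case: (leqP k #|T|) => // HT; exfalso.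
  have HTc : #|[set: T]| < k by rewrite cardsT.
  have [C [Cne _ _ CY]] := comp_lemma Ht HTc.
  by case/set0Pn: Cne => u /CY; rewrite inE.
- by move=> a b Ha Hb; rewrite leq_min Ha Hb.
- move=> X Hc; case: (leqP k #|X|) => // HX; exfalso.
  have [C [Cne Cc CO CY]] := comp_lemma Ht HX.
  move/forall_inP: Hc => /(_ C (toB _ Cne Cc CO)) /set0Pn [u].
  by rewrite inE => /andP [uX /CY]; rewrite uX.
Qed.

End Aux.

Theorem lemma5p8 (T : finType) (e : rel T) (k : nat) :
  symmetric e -> irreflexive e -> 0 < #|T| -> 0 < k ->
  (exists B : {set {set T}}, is_bramble e B /\ k <= bramble_order B) <->
  (exists O : {set osep T}, Fk_tangle e k O).
Proof.
move=> Hs _ _ _; split.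
- by case=> B [HB Hk]; exact: (forward Hs HB Hk).
- by case=> O HO; exact: (backward Hs HO).
Qed.
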